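(* Let $\ket\psi$ be a pure $n$-qubit state and $t\ge1$. With $p_t$ the output distribution of the $t$-copy hidden cut circuit on $\ket\psi$, we have $p_t = p_1^{\ast t} = p_1\ast\cdots\ast p_1$ ($t$ factors), where $(f\ast g)(\bm x)=\sum_{\bm x'\in\{0,1\}^n} f(\bm x')\,g(\bm x\oplus\bm x')$. Equivalently $p_t=\mathcal F^{-1}\bigl[\mathcal F[p_1]^t\bigr]$ with $\mathcal F[f](\bm s)=\sum_{\bm x}(-1)^{\bm x\cdot\bm s}f(\bm x)$ and $\mathcal F^{-1}[\hat f](\bm x)=2^{-n}\sum_{\bm s}(-1)^{\bm x\cdot\bm s}\hat f(\bm s)$.
   Context: $\oplus$ is bitwise addition mod 2, and $\bm x\cdot\bm s$ is the dot product mod 2. $\mathrm{SWAP}_{\bm s}$ acts on two copies of the $n$-qubit space by swapping the qubits of subsystem $\bm s$ (bitstring $\bm s\in\{0,1\}^n$, qubit $j$ included iff $s_j=1$) between the copies. The $t$-copy hidden cut circuit: an $n$-qubit group register is initialized to $\ket{0^n}$ and a state register to $(\ket\psi\ket\psi)^{\otimes t}$; apply $H^{\otimes n}$ to the group register; apply $\sum_{\bm s}\ket{\bm s}\bra{\bm s}\otimes \mathrm{SWAP}_{\bm s}^{\otimes t}$; apply $H^{\otimes n}$ to the group register; measure the group register in the computational basis; $p_t$ denotes the resulting distribution. *)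

(* Defs.v *)
(* Amplitudes live in an arbitrary numClosedFieldType C
   (e.g. algC, or complex R for R : rcfType), which contains the complex numbers case. *)
From mathcomp Require Import all_boot all_order all_algebra.
Set Implicit Arguments. Unset Strict Implicit. Unset Printing Implicit Defensive.
Import Order.TTheory GRing.Theory Num.Theory.
Local Open Scope ring_scope.

(* n-bit strings; bit i is qubit i *)
Definition bits (n : nat) := {ffun 'I_n -> bool}.
Definition zerob (n : nat) : bits n := [ffun _ => false].
Definition xorv (n : nat) (x y : bits n) : bits n := [ffun i => x i (+) y i].
Definition dotb (n : nat) (x s : bits n) : bool :=
  \big[addb/false]_(i < n) (x i && s i).

(* computational basis of the state register (|psi>|psi>)^{(x) t}:
   t pairs (first copy, second copy) of n-bit strings *)
Definition sreg (n t : nat) := {ffun 'I_t -> bits n * bits n}.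

(* SWAP_s on a basis state |a>|b> of two copies: swap qubit j iff s_j = 1 *)
Definition swapS (n : nat) (s : bits n) (ab : bits n * bits n) : bits n * bits n :=
  ([ffun j => if s j then ab.2 j else ab.1 j],
   [ffun j => if s j then ab.1 j else ab.2 j]).
Definition swapT (n t : nat) (s : bits n) (k : sreg n t) : sreg n t :=
  [ffun j => swapS s (k j)].

Section Circuit.
Variable C : numClosedFieldType.
Variables n t : nat.

(* joint vector on group register (x) state register *)
Definition cvec := bits n * sreg n t -> C.

(* amplitude of (|psi>|psi>)^{(x) t} *)
Definition prodstate (psi : bits n -> C) (k : sreg n t) : C :=
  \prod_(j < t) (psi (k j).1 * psi (k j).2).

Definition init_state (psi : bits n -> C) : cvec :=
  fun gk => (gk.1 == zerob n)%:R * prodstate psi gk.2.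

Definition hadamardN (g g' : bits n) : C :=
  \prod_(i < n) ((sqrtC 2)^-1 * (-1) ^+ (g i && g' i)).

Definition applyH (v : cvec) : cvec :=
  fun gk => \sum_(g' : bits n) hadamardN gk.1 g' * v (g', gk.2).

(* sum_s |s><s| (x) SWAP_s^{(x) t}  (SWAP acts as a basis permutation) *)
Definition applyCSWAP (v : cvec) : cvec :=
  fun gk => \sum_(k : sreg n t) (swapT gk.1 k == gk.2)%:R * v (gk.1, k).

(* output distribution p_t of the t-copy hidden cut circuit (Born rule) *)
Definition hidden_cut_dist (psi : bits n -> C) : bits n -> C :=
  fun x => \sum_(k : sreg n t)
             `| applyH (applyCSWAP (applyH (init_state psi))) (x, k) | ^+ 2.
End Circuit.

Section Fourier.
Variable C : numClosedFieldType.
Variable n : nat.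

Definition bconv (f g : bits n -> C) : bits n -> C :=
  fun x => \sum_(x' : bits n) f x' * g (xorv x x').

(* f^{*t} = f * ... * f  (t factors, t >= 1) *)
Definition convpow (f : bits n -> C) (t : nat) : bits n -> C :=
  iter t.-1 (bconv f) f.

Definition fourier (f : bits n -> C) : bits n -> C :=
  fun s => \sum_(x : bits n) (-1) ^+ (dotb x s) * f x.

Definition ifourier (fh : bits n -> C) : bits n -> C :=
  fun x => (2%:R ^+ n)^-1 * \sum_(s : bits n) (-1) ^+ (dotb x s) * fh s.
End Fourier.

(* Main.v *)
Require Import Defs.
From mathcomp Require Import all_boot all_order all_algebra.
From mathcomp Require Import ring.
From Stdlib Require Import FunctionalExtensionality.
Import GRing.Theory Num.Theory.
Local Open Scope ring_scope.

Section F.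
Variable C : numClosedFieldType.
Variable n : nat.

Definition chi (x s : bits n) : C := \prod_(i < n) (-1) ^+ (x i && s i).

Lemma dotbE (x s : bits n) : (-1) ^+ dotb x s = chi x s.
Proof.
rewrite /dotb /chi.
by apply: (big_morph (fun b : bool => (-1) ^+ b : C)); [exact: signr_addb| rewrite expr0].
Qed.

Lemma chiC x s : chi x s = chi s x.
Proof. by apply: eq_bigr => i _; rewrite andbC. Qed.

Lemma chi_xorr x s u : chi x (xorv s u) = chi x s * chi x u.
Proof.
rewrite /chi -big_split /=; apply: eq_bigr => i _.
by rewrite ffunE -signr_addb; case: (x i); case: (s i); case: (u i).
Qed.

Lemma chi_xorl x y s : chi (xorv x y) s = chi x s * chi y s.
Proof. by rewrite chiC chi_xorr !(chiC s). Qed.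

Lemma chi_sq x s : chi x s * chi x s = 1.
Proof.
rewrite /chi -big_split /= big1 // => i _.
by rewrite -signr_addb addbb.
Qed.

Lemma chi_orth (s u : bits n) :
  \sum_(x : bits n) chi x s * chi x u = 2%:R ^+ n * (s == u)%:R.
Proof.
have -> : \sum_(x : bits n) chi x s * chi x u =
   \prod_(i < n) \sum_(b : bool) (-1) ^+ (b && s i) * (-1) ^+ (b && u i) :> C.
  rewrite bigA_distr_bigA /=; apply: eq_bigr => x _.
  by rewrite /chi -big_split.
have Hi i : \sum_(b : bool) (-1) ^+ (b && s i) * (-1) ^+ (b && u i) =
            (if s i == u i then 2%:R else 0) :> C.
  rewrite big_bool /=; case: (s i); case: (u i) => /=; rewrite ?expr0 ?expr1 ?mulr1 ?mulN1r ?opprK ?subrr ?addNr ?mul1r //.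
  by rewrite addrC subrr.
under eq_bigr do rewrite Hi.
case: eqP => [<-|/eqP Hne].
  by rewrite mulr1 (eq_bigr (fun _ => 2%:R)) ?prodr_const ?card_ord // => i _; rewrite eqxx.
rewrite mulr0.
have [i Hi'] : exists i, s i != u i.
  apply/existsP; apply: contraR Hne => /existsPn H; apply/eqP/ffunP => i.
  by move: (H i); rewrite negbK => /eqP.
by rewrite (bigD1 i) //= (negbTE Hi') mul0r.
Qed.

Lemma two_neq0 : (2%:R ^+ n : C) != 0.
Proof. by rewrite expf_neq0 // pnatr_eq0. Qed.

Lemma ifourierE (g : bits n -> C) x :
  ifourier g x = (2%:R ^+ n)^-1 * \sum_s chi x s * g s.
Proof. by rewrite /ifourier; congr (_ * _); apply: eq_bigr => s _; rewrite dotbE. Qed.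

Lemma fourier_ifourier (g : bits n -> C) : fourier (ifourier g) =1 g.
Proof.
move=> s; rewrite /fourier.
under eq_bigr do rewrite ifourierE dotbE mulrCA big_distrr /=.
rewrite -big_distrr /= exchange_big /=.
have E u : \sum_(x : bits n) chi x s * (chi x u * g u) = 2%:R ^+ n * ((s == u)%:R * g u).
  by rewrite mulrA -chi_orth big_distrl /=; apply: eq_bigr => x _; rewrite mulrA.
under eq_bigr do rewrite E.
rewrite -big_distrr /= mulrA mulVf ?two_neq0 // mul1r.
rewrite (bigD1 s) //= eqxx mul1r big1 ?addr0 // => u Hu.
by rewrite eq_sym (negbTE Hu) mul0r.
Qed.

Lemma bconv_ifourier (a b : bits n -> C) :
  bconv (ifourier a) (ifourier b) =1 ifourier (fun s => a s * b s).
Proof.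
move=> x; rewrite /bconv ifourierE.
set c := (2%:R ^+ n : C)^-1.
have E x' : ifourier a x' * ifourier b (xorv x x') =
   c * c * \sum_s \sum_u (a s * b u * chi x u) * (chi x' s * chi x' u).
  rewrite !ifourierE -/c mulrACA big_distrlr /=; congr (_ * _); apply: eq_bigr => s _.
  apply: eq_bigr => u _; rewrite chi_xorl; ring.
under eq_bigr do rewrite E.
rewrite -mulr_sumr exchange_big /=.
under eq_bigr do rewrite exchange_big /=.
have F s u : \sum_(x' : bits n) (a s * b u * chi x u) * (chi x' s * chi x' u)
   = (a s * b u * chi x u) * (2%:R ^+ n * (s == u)%:R).
  by rewrite -chi_orth mulr_sumr.
under eq_bigr do under eq_bigr do rewrite F.
under eq_bigr => s _ do (rewrite (bigD1 s) //= eqxx mulr1 big1 ?addr0;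
  last by move=> u Hu; rewrite eq_sym (negbTE Hu) !mulr0).
rewrite -mulrA; congr (_ * _); rewrite mulr_sumr; apply: eq_bigr => s _.
rewrite /c mulrC -!mulrA mulfV ?two_neq0 // mulr1; ring.
Qed.
End F.
Arguments chi {C n}.
Set Implicit Arguments.


Lemma sum_delta (C : numClosedFieldType) (T : finType) (a : T) (F : T -> C) :
  \sum_(x : T) (x == a)%:R * F x = F a.
Proof.
rewrite (bigD1 a) //= eqxx mul1r big1 ?addr0 // => x Hx.
by rewrite (negbTE Hx) mul0r.
Qed.

Lemma swapS_inv n (s : bits n) : involutive (swapS s).
Proof.
move=> [a b]; rewrite /swapS /=; congr (_, _); apply/ffunP => j; rewrite !ffunE;
 by case: (s j).
Qed.

Lemma swapS_comp n (s s' : bits n) ab :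
  swapS s' (swapS s ab) = swapS (xorv s s') ab.
Proof.
case: ab => a b; rewrite /swapS /=; congr (_, _); apply/ffunP => j; rewrite !ffunE;
 by case: (s j); case: (s' j).
Qed.

Lemma swapT_inv n t (s : bits n) : involutive (@swapT n t s).
Proof. by move=> k; apply/ffunP => j; rewrite !ffunE swapS_inv. Qed.

Lemma swapT_comp n t (s s' : bits n) (k : sreg n t) :
  swapT s' (swapT s k) = swapT (xorv s s') k.
Proof. by apply/ffunP => j; rewrite !ffunE swapS_comp. Qed.

Lemma xorvK n (s : bits n) : involutive (xorv s).
Proof. by move=> u; apply/ffunP => j; rewrite !ffunE addKb. Qed.

Section Circ.
Variable C : numClosedFieldType.
Variables n t : nat.
Variable psi : bits n -> C.

Definition cc : C := (sqrtC 2)^-1 ^+ n.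
Definition phi2 (ab : bits n * bits n) : C := psi ab.1 * psi ab.2.
Definition gsw (u : bits n) : C :=
  \sum_(ab : bits n * bits n) phi2 ab * (phi2 (swapS u ab))^*.

Lemma hadE (g g' : bits n) : hadamardN C g g' = cc * chi g g'.
Proof. by rewrite /hadamardN big_split /= prodr_const card_ord. Qed.

Lemma chi0 (g : bits n) : chi g (zerob n) = 1 :> C.
Proof. by rewrite /chi big1 // => i _; rewrite ffunE andbF. Qed.

Lemma ccE : cc * cc = (2%:R ^+ n)^-1.
Proof.
rewrite /cc -exprMn -invfM -expr2 sqrtCK exprVn //.
Qed.

Lemma chi_conj (x s : bits n) : (chi x s : C)^* = chi x s.
Proof. by rewrite /chi rmorph_prod; apply: eq_bigr => i _; rewrite rmorph_sign. Qed.

Lemma amplE x (k : sreg n t) :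
  applyH (applyCSWAP (applyH (init_state psi))) (x, k) =
  cc * cc * \sum_(s : bits n) chi x s * prodstate psi (swapT s k).
Proof.
rewrite /applyH /= mulr_sumr; apply: eq_bigr => s _.
rewrite /applyCSWAP /=.
have -> : \sum_(k' : sreg n t) (swapT s k' == k)%:R *
     (\sum_g' hadamardN C (s, k').1 g' * init_state psi (g', (s, k').2)) =
     \sum_(k' : sreg n t) (k' == swapT s k)%:R *
     (\sum_g' hadamardN C s g' * init_state psi (g', k')).
  apply: eq_bigr => k' _.
  suff -> : (swapT s k' == k) = (k' == swapT s k) by [].
  by apply/eqP/eqP => [<-|->]; rewrite swapT_inv.
rewrite sum_delta /init_state /=.
under eq_bigr do rewrite mulrCA.
rewrite sum_delta !hadE chi0 mulr1; ring.
Qed.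

Lemma Gsum (u : bits n) :
  \sum_(k : sreg n t) prodstate psi k * (prodstate psi (swapT u k))^* = gsw u ^+ t.
Proof.
rewrite /prodstate.
under eq_bigr => k _ do rewrite rmorph_prod -big_split /=.
have -> : \sum_(k : sreg n t) \prod_(j < t) (psi (k j).1 * psi (k j).2 * (psi (swapT u k j).1 * psi (swapT u k j).2)^*)
 = \sum_(k : sreg n t) \prod_(j < t) (phi2 (k j) * (phi2 (swapS u (k j)))^*).
  by apply: eq_bigr => k _; apply: eq_bigr => j _; rewrite ffunE.
rewrite -(bigA_distr_bigA (fun (j : 'I_t) ab => phi2 ab * (phi2 (swapS u ab))^*)) /=.
by rewrite prodr_const card_ord.
Qed.

Lemma distE (x : bits n) :
  hidden_cut_dist t psi x = ifourier (fun u => gsw u ^+ t) x.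
Proof.
rewrite /hidden_cut_dist ifourierE.
have dreal : cc^* = cc.
  by apply: geC0_conj; rewrite exprn_ge0 // invr_ge0 sqrtC_ge0 ler0n.
have cM (a b : C) : (a * b)^* = a^* * b^* by rewrite rmorphM.
have cS (F : bits n -> C) : (\sum_s F s)^* = \sum_s (F s)^* by rewrite rmorph_sum.
under eq_bigr => k _ do rewrite amplE normCK !cM dreal cS.
under eq_bigr => k _ do (rewrite mulrACA big_distrlr /=; under eq_bigr => s _ do
   under eq_bigr => s' _ do rewrite cM chi_conj).
rewrite -mulr_sumr exchange_big /=.
under eq_bigr => s _ do rewrite exchange_big /=.
have E s s' : \sum_(k : sreg n t) chi x s * prodstate psi (swapT s k) *
        (chi x s' * (prodstate psi (swapT s' k))^*) =
     chi x s * chi x s' * gsw (xorv s s') ^+ t.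
  rewrite -Gsum mulr_sumr (reindex_inj (can_inj (swapT_inv s))) /=.
  apply: eq_bigr => k _; rewrite swapT_inv swapT_comp; ring.
under eq_bigr => s _ do under eq_bigr => s' _ do rewrite E.
under eq_bigr => s _ do rewrite (reindex_inj (can_inj (xorvK s))) /=.
under eq_bigr => s _ do under eq_bigr => u _ do rewrite xorvK chi_xorr mulrA chi_sq mul1r.
rewrite sumr_const card_ffun card_bool card_ord -[in LHS]mulr_natr natrX ccE.
have h2 := two_neq0 C n. field. exact: h2.
Qed.
End Circ.

Theorem mainTheorem3 (C : numClosedFieldType) (n t : nat) (psi : bits n -> C)
  (Hpsi : \sum_(a : bits n) `|psi a| ^+ 2 = 1) (Ht : (1 <= t)%N) :
  hidden_cut_dist t psi = convpow (hidden_cut_dist 1 psi) t /\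
  hidden_cut_dist t psi = ifourier (fun s => fourier (hidden_cut_dist 1 psi) s ^+ t).
Proof.
have Pt : forall m, hidden_cut_dist m psi = ifourier (fun u => @gsw C n psi u ^+ m).
  by move=> m; apply: functional_extensionality => x; rewrite distE.
have F1 : fourier (hidden_cut_dist 1 psi) = fun u => @gsw C n psi u ^+ 1.
  by apply: functional_extensionality => u; rewrite Pt fourier_ifourier.
split; last by rewrite F1 Pt.
rewrite /convpow; case: t Ht => // t' _ /=.
elim: t' => [|k IH] /=; first by [].
rewrite -IH !Pt; apply: functional_extensionality => x.
by rewrite bconv_ifourier.
Qed.
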